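(* Let $q=p^m$ with $p$ an odd prime, $m\ge1$, and $q\equiv 1\pmod 6$. Let $f(x)=x^{q+2}$ on $\mathbb{F}_{q^2}$ and for $b\in\mathbb{F}_{q^2}$ put $\beta(b)=\beta_f(1,\tfrac14 b)$. Then for every $c\in\mathbb{F}_q^*$: $\beta(2c)=3$ if $c^2+1\in C_1$; $\beta(2c)\in\{0,3\}$ if $c^2+1\in C_0$; and $\beta(2c)\in\{0,1,2\}$ if $c^2+1=0$.
   Context: $\beta_f(a,b)$ is the number of $(x,y)\in\mathbb{F}_{q^2}^2$ with $f(x)-f(y)=b$ and $f(x+a)-f(y+a)=b$. $C_0$ (resp. $C_1$) denotes the set of nonzero squares (resp. non-squares) in $\mathbb{F}_q^*$. *)

(* Defs.v *)
From HB Require Import structures.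
From mathcomp Require Import all_boot all_order all_algebra all_field.
Set Implicit Arguments. Unset Strict Implicit. Unset Printing Implicit Defensive.
Import GRing.Theory.
Local Open Scope ring_scope.

(* K plays the role of F_{q^2}; F_q is its subfield {x | x^q = x}. *)
Definition in_Fq (K : finFieldType) (q : nat) (x : K) : bool := x ^+ q == x.

Definition in_C0 (K : finFieldType) (q : nat) (x : K) : bool :=
  [&& in_Fq q x, x != 0 & [exists y : K, in_Fq q y && (y ^+ 2 == x)]].
Definition in_C1 (K : finFieldType) (q : nat) (x : K) : bool :=
  [&& in_Fq q x, x != 0 & ~~ [exists y : K, in_Fq q y && (y ^+ 2 == x)]].

Definition beta_f (K : finFieldType) (f : K -> K) (a b : K) : nat :=
  #|[set xy : K * K | (f xy.1 - f xy.2 == b) && (f (xy.1 + a) - f (xy.2 + a) == b)]|.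

(* Main.v *)
Require Import Defs.
From HB Require Import structures.
From mathcomp Require Import all_boot all_order all_algebra all_field.
From mathcomp Require Import cyclic ring zify.
Set Implicit Arguments. Unset Strict Implicit. Unset Printing Implicit Defensive.
Import GRing.Theory.
Local Open Scope ring_scope.

Section L9.
Variables (K : finFieldType) (p m q : nat).
Hypotheses (pp : prime p) (podd : odd p) (m0 : (0 < m)%N) (qE : q = (p ^ m)%N)
  (q6 : (q %% 6 = 1)%N) (cardK : #|K| = (q ^ 2)%N).

Lemma charK : p \in [pchar K].
Proof. by apply: (@card_finPcharP _ p (m * 2)) => //; rewrite cardK qE expnM. Qed.

Lemma q_gt0 : (0 < q)%N.
Proof. by rewrite qE expn_gt0 prime_gt0. Qed.

Definition cj (x : K) := x ^+ q.

Lemma cjD x y : cj (x + y) = cj x + cj y.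
Proof.
apply: exprDn_pchar; rewrite qE pnatX (pnatE _ pp) charK //.
Qed.

Lemma cjM x y : cj (x * y) = cj x * cj y.
Proof. exact: exprMn. Qed.

Lemma cj1 : cj 1 = 1.
Proof. exact: expr1n. Qed.

Lemma cj0 : cj 0 = 0.
Proof. by rewrite /cj expr0n eqn0Ngt q_gt0. Qed.

Lemma cjN x : cj (- x) = - cj x.
Proof. by apply/eqP; rewrite -subr_eq0 opprK -cjD addNr cj0. Qed.

Lemma cjB x y : cj (x - y) = cj x - cj y.
Proof. by rewrite cjD cjN. Qed.

Lemma cjn n : cj n%:R = n%:R.
Proof. elim: n => [|n IH]; first by rewrite cj0. by rewrite -addn1 natrD cjD IH cj1. Qed.

Lemma cjK x : cj (cj x) = x.
Proof. by rewrite /cj -exprM mulnn -cardK expf_card. Qed.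

Lemma cjV x : cj (x^-1) = (cj x)^-1.
Proof. exact: exprVn. Qed.

Lemma cjX x n : cj (x ^+ n) = (cj x) ^+ n.
Proof. by rewrite /cj -!exprM mulnC. Qed.

Lemma cj_eq0 x : (cj x == 0) = (x == 0).
Proof. by rewrite /cj expf_eq0 q_gt0. Qed.


Definition k := (q %/ 6)%N.
Lemma qk : q = (6 * k + 1)%N.
Proof. by rewrite /k {1}(divn_eq q 6) q6 mulnC. Qed.

Lemma k_gt0 : (0 < k)%N.
Proof.
have p2 := prime_gt1 pp.
have : (p <= q)%N by rewrite qE -{1}(expn1 p) leq_pexp2l // ltnW.
rewrite qk; case: k => //= ; rewrite muln0 add0n => H. lia.
Qed.

Lemma natK_neq0 n : ~~ (p %| n)%N -> (n%:R : K) != 0.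
Proof. by rewrite (dvdn_pcharf charK). Qed.

Lemma two_neq0 : (2%:R : K) != 0.
Proof.
apply: natK_neq0; apply/negP => /dvdn_leq => /(_ isT) H.
have p2 := prime_gt1 pp.
have p2e : p = 2%N by lia.
by move: podd; rewrite p2e.
Qed.

Lemma three_neq0 : (3%:R : K) != 0.
Proof.
apply: natK_neq0; apply/negP => /dvdn_leq => /(_ isT) H.
have p2 := prime_gt1 pp.
have p3 : p = 3%N.
  have : p != 2%N by apply/eqP => e; move: podd; rewrite e.
  move/eqP; lia.
have : (3 %| q)%N by rewrite qE -p3 dvdn_exp.
rewrite qk; lia.
Qed.

Lemma four_neq0 : (4%:R : K) != 0.
Proof. by rewrite (_ : 4 = 2 * 2)%N // natrM mulf_neq0 // two_neq0. Qed.


Lemma cardK_gt1 : (1 < #|K|)%N.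
Proof. have := k_gt0; rewrite cardK qk; nia. Qed.

Lemma nE : (#|K|.-1 = 6 * k * (6 * k + 2))%N.
Proof. rewrite cardK qk; nia. Qed.

Lemma unit_pow (x : K) : x != 0 -> x ^+ (#|K|.-1) = 1.
Proof.
move=> nx; apply: (mulfI nx); rewrite mulr1 -exprS prednK ?expf_card //.
by apply: ltn_trans cardK_gt1.
Qed.

Lemma prim_root_ex : exists z : K, (#|K|.-1).-primitive_root z.
Proof.
have : has (#|K|.-1).-primitive_root (enum [pred x : K | x != 0]).
  apply: has_prim_root.
  - by have := cardK_gt1; case: #|K| => // -[].
  - by apply/allP => x; rewrite mem_enum inE => nx; rewrite unity_rootE unit_pow.
  - exact: enum_uniq.
  - by rewrite -cardE -(cardC1 (0 : K)).
by case/hasP => z _ pz; exists z.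
Qed.

Lemma cube_root1 : exists w : K, [/\ w ^+ 3 = 1, w != 1 & cj w = w].
Proof.
have [z pz] := prim_root_ex.
exists (z ^+ (2 * k * (6 * k + 2))); split.
- by rewrite -exprM (_ : (_ * 3 = #|K|.-1)%N) ?(prim_expr_order pz) // nE; lia.
- rewrite -(prim_order_dvd pz) nE; apply/negP => /dvdn_leq.
  have := k_gt0; move=> kp H; have := H ltac:(nia); nia.
- rewrite /cj qk -exprM (_ : (_ * (6 * k + 1) = (2 * k * (6 * k + 2)) + (#|K|.-1) * (2 * k))%N).
    by rewrite exprD (exprM z #|K|.-1) (prim_expr_order pz) expr1n mulr1.
  rewrite nE; nia.
Qed.

Lemma sqrtm3 : exists s : K, s ^+ 2 = - 3%:R /\ cj s = s.
Proof.
have [w [w3 w1 cw]] := cube_root1.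
have ww : w ^+ 2 + w + 1 = 0.
  have e : (w - 1) * (w ^+ 2 + w + 1) = w ^+ 3 - 1 by ring.
  have : (w - 1) * (w ^+ 2 + w + 1) = 0 by rewrite e w3 subrr.
  move/eqP; rewrite mulf_eq0 => /orP [|/eqP //].
  by rewrite subr_eq0 => /eqP e'; move: w1; rewrite e' eqxx.
exists (2%:R * w + 1); split.
  have e : (2%:R * w + 1) ^+ 2 - - 3%:R = 4%:R * (w ^+ 2 + w + 1) by ring.
  by apply/eqP; rewrite -subr_eq0 e ww mulr0.
by rewrite cjD cjM cjn cw cj1.
Qed.

Lemma sqrt_Fq d : cj d = d -> d != 0 -> exists e : K, e ^+ 2 = d.
Proof.
move=> cd nd.
have [z pz] := prim_root_ex.
have [[i _] /= di] := prim_rootP pz (unit_pow nd).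
have dq : d ^+ (6 * k) = 1.
  apply: (mulfI nd); rewrite mulr1 -exprS.
  by rewrite (_ : (6 * k).+1 = q)%N ?cd // qk addn1.
rewrite di in dq *.
move: dq; rewrite -exprM => /eqP; rewrite -(prim_order_dvd pz) nE.
rewrite [(i * _)%N]mulnC dvdn_pmul2l; last by have := k_gt0; lia.
move=> H; have H2 : (2 %| i)%N.
  by apply: dvdn_trans H; rewrite (_ : 6 * k + 2 = 2 * (3 * k + 1))%N ?dvdn_mulr //; lia.
by exists (z ^+ (i %/ 2)); rewrite -exprM divnK.
Qed.

Definition hh : K := (2%:R)^-1.
Lemma cjhh : cj hh = hh.
Proof. by rewrite /hh cjV cjn. Qed.
Lemma hh_neq0 : hh != 0.
Proof. by rewrite /hh invr_eq0 two_neq0. Qed.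

Definition E (c v : K) : bool := 4%:R * cj v * v ^+ 2 + cj v + 2%:R * v == c.

Lemma fwd c x y : c != 0 ->
  cj x * x ^+ 2 - cj y * y ^+ 2 = c * hh ->
  cj (x + 1) * (x + 1) ^+ 2 - cj (y + 1) * (y + 1) ^+ 2 = c * hh ->
  y = - x - 1.
Proof.
move=> c0 H1 H2.
rewrite !cjD cj1 in H2.
set a' := cj x in H1 H2; set b' := cj y in H1 H2.
set u := x + y + 1; set v := x - y.
have cu : cj u = a' + b' + 1 by rewrite /u !cjD cj1.
have cv : cj v = a' - b' by rewrite /v cjB.
have A : u * cj v + cj u * v + u * v = 0.
  rewrite cu cv.
  have e : u * (a' - b') + (a' + b' + 1) * v + u * v
     = ((a' + 1) * (x + 1) ^+ 2 - (b' + 1) * (y + 1) ^+ 2) - (a' * x ^+ 2 - b' * y ^+ 2)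
    by rewrite /u /v; ring.
  by rewrite e H1 H2 subrr.
have ue : u = x + y + 1 by [].
have ve : v = x - y by [].
clearbody u v.
have A' := congr1 cj A; rewrite !cjD !cjM !cjK cj0 in A'.
have v0 : v != 0.
  apply/eqP => v0; have xy : x = y by apply/eqP; rewrite -subr_eq0 -ve v0.
  move: H1; rewrite /b' -xy -/a' subrr => /esym/eqP.
  by rewrite mulf_eq0 (negbTE c0) (negbTE hh_neq0).
case: (eqVneq u 0) => [u0|un0].
  have e : y = u - x - 1 by rewrite ue; ring.
  by rewrite e u0 sub0r.
exfalso.
have cv0 : cj v != 0 by rewrite cj_eq0.
have UV : u * v = cj u * cj v.
  apply/eqP; rewrite -subr_eq0.
  have e : u * v - cj u * cj v = (u * cj v + cj u * v + u * v) - (cj u * v + u * cj v + cj u * cj v) by ring.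
  by rewrite e A A' subrr.
set r := v / cj v.
have rr : r ^+ 2 + r + 1 = 0.
  have e : u * cj v ^+ 2 * (r ^+ 2 + r + 1) = cj v * (u * cj v + cj u * v + u * v) - v * (cj u * cj v - u * v).
    rewrite /r; field; exact: cv0.
  move: e; rewrite A -UV subrr !mulr0 subr0 => /eqP.
  rewrite mulf_eq0 => /orP [|/eqP //].
  by rewrite mulf_eq0 (negbTE un0) /= expf_eq0 (negbTE cv0) andbF.
have r3 : r ^+ 3 = 1.
  have e : r ^+ 3 = (r - 1) * (r ^+ 2 + r + 1) + 1 by ring.
  by rewrite e rr mulr0 add0r.
have r0 : r != 0 by rewrite /r mulf_neq0 ?invr_eq0.
have cr : cj r = r^-1 by rewrite /r cjM cjV cjK invf_div.
have rq : r ^+ 2 = 1.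
  have : r ^+ (q + 1) = 1 by rewrite exprD -/(cj r) cr expr1 mulVf.
  have e : (q + 1 = 3 * (2 * k) + 2)%N by rewrite qk; lia.
  by rewrite e exprD exprM r3 expr1n mul1r.
have e : (3%:R : K) = (r ^+ 2 - 1) - ((r ^+ 2 + r + 1) - (r ^+ 2 - 1)) * (r - 2%:R) by ring.
move: e; rewrite rr rq subrr => e'.
have : (3%:R : K) = 0 by rewrite e'; ring.
by move/eqP: three_neq0.
Qed.

Lemma fwdE c x : cj x * x ^+ 2 - cj (- x - 1) * (- x - 1) ^+ 2 = c * hh -> E c (x + hh).
Proof.
move=> H; apply/eqP; rewrite cjD cjhh.
rewrite cjB cjN cj1 in H.
have e : 4%:R * (cj x + hh) * (x + hh) ^+ 2 + (cj x + hh) + 2%:R * (x + hh)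
   = 2%:R * (cj x * x ^+ 2 - (- cj x - 1) * (- x - 1) ^+ 2).
  rewrite /hh; field; exact: two_neq0.
rewrite e H /hh; field; exact: two_neq0.
Qed.

Lemma bwd c v : E c v ->
  (cj (v - hh) * (v - hh) ^+ 2 - cj (- v - hh) * (- v - hh) ^+ 2 = c * hh) /\
  (cj (v - hh + 1) * (v - hh + 1) ^+ 2 - cj (- v - hh + 1) * (- v - hh + 1) ^+ 2 = c * hh).
Proof.
move/eqP=> H; rewrite !(cjD, cjB, cjN, cj1, cjhh).
have e1 : (cj v - hh) * (v - hh) ^+ 2 - (- cj v - hh) * (- v - hh) ^+ 2
   = (4%:R * cj v * v ^+ 2 + cj v + 2%:R * v) * hh.
  rewrite /hh; field; exact: two_neq0.
have e2 : (cj v - hh + 1) * (v - hh + 1) ^+ 2 - (- cj v - hh + 1) * (- v - hh + 1) ^+ 2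
   = (4%:R * cj v * v ^+ 2 + cj v + 2%:R * v) * hh.
  rewrite /hh; field; exact: two_neq0.
by rewrite e1 e2 H.
Qed.

Lemma beta_S c : c != 0 ->
  #|[set xy : K * K | (xy.1 ^+ (q + 2) - xy.2 ^+ (q + 2) == c * hh) &&
       ((xy.1 + 1) ^+ (q + 2) - (xy.2 + 1) ^+ (q + 2) == c * hh)]| = #|[set v | E c v]|.
Proof.
move=> c0.
have fE z : z ^+ (q + 2) = cj z * z ^+ 2 by rewrite exprD.
rewrite -(card_imset _ (f := fun v => (v - hh, - v - hh))); last first.
  by move=> v w [e _]; apply: (addIr (- hh)).
apply: eq_card => -[x y]; rewrite inE /= !fE.
apply/idP/imsetP.
- case/andP => /eqP H1 /eqP H2.
  have ye := fwd c0 H1 H2.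
  exists (x + hh); first by rewrite inE; apply: fwdE; rewrite -ye.
  rewrite addrK ye; congr pair; rewrite /hh; field; exact: two_neq0.
- case=> v; rewrite inE => Ev [-> ->].
  by have [B1 B2] := bwd Ev; rewrite B1 B2 !eqxx.
Qed.

Lemma E_split c v : cj c = c -> E c v ->
  (cj v = v /\ 4%:R * v ^+ 3 + 3%:R * v = c) \/
  (cj v = c - v /\ 4%:R * v ^+ 2 - 4%:R * c * v - 1 = 0).
Proof.
move=> cc /eqP H.
have H' := congr1 cj H; rewrite !(cjD, cjM, cjn, cjX, cjK) cc in H'.
have e : (v - cj v) * (4%:R * v * cj v + 1)
   = (4%:R * cj v * v ^+ 2 + cj v + 2%:R * v) - (4%:R * v * cj v ^+ 2 + v + 2%:R * cj v) by ring.
rewrite H H' subrr in e.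
move/eqP: e; rewrite mulf_eq0 => /orP [/eqP h|/eqP h].
  have cv : cj v = v by apply/esym/eqP; rewrite -subr_eq0 h.
  left; split => //; rewrite -H cv; ring.
have e2 : cj v = (4%:R * cj v * v ^+ 2 + cj v + 2%:R * v) - v - v * (4%:R * v * cj v + 1) by ring.
rewrite H h mulr0 subr0 in e2.
right; split => //.
have -> : c = cj v + v by rewrite e2; ring.
have e3 : 4%:R * v ^+ 2 - 4%:R * (cj v + v) * v - 1 = - (4%:R * v * cj v + 1) by ring.
by rewrite e3 h oppr0.
Qed.

Lemma E_F c v : cj v = v -> 4%:R * v ^+ 3 + 3%:R * v = c -> E c v.
Proof. by move=> cv H; rewrite /E cv -H; apply/eqP; ring. Qed.

Lemma E_N c v : cj v = c - v -> 4%:R * v ^+ 2 - 4%:R * c * v - 1 = 0 -> E c v.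
Proof.
move=> cv h; rewrite /E cv; apply/eqP.
have e : 4%:R * (c - v) * v ^+ 2 + (c - v) + 2%:R * v = c - v * (4%:R * v ^+ 2 - 4%:R * c * v - 1) by ring.
by rewrite e h mulr0 subr0.
Qed.

Lemma caseZ c : cj c = c -> c ^+ 2 + 1 = 0 -> (#|[set v | E c v]| <= 2)%N.
Proof.
move=> cc Z.
apply: leq_trans (subset_leq_card (_ : _ \subset [set c * hh; - c])) _; last first.
  by rewrite cards2; case: (_ != _).
apply/subsetP => v; rewrite inE => /(E_split cc) [[cv H]|[cv H]]; rewrite !inE.
- have e : 4%:R * v ^+ 3 + 3%:R * v - c
      = 4%:R * (v - c * hh) ^+ 2 * (v + c) + (c ^+ 2 + 1) * (3%:R * v - c).
    rewrite /hh; field; exact: two_neq0.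
  rewrite H subrr Z mul0r addr0 in e.
  by move/esym/eqP: e; rewrite !mulf_eq0 (negbTE four_neq0) /= subr_eq0 addr_eq0 orbb.
- have e : 4%:R * v ^+ 2 - 4%:R * c * v - 1 = 4%:R * (v - c * hh) ^+ 2 - (c ^+ 2 + 1).
    rewrite /hh; field; exact: two_neq0.
  rewrite H Z subr0 in e.
  by move/esym/eqP: e; rewrite !mulf_eq0 (negbTE four_neq0) /= orbb subr_eq0 => ->.
Qed.

Definition r2 (r s e : K) := (- r + s * e) * hh.
Definition r3 (r s e : K) := (- r - s * e) * hh.

Lemma cubic_fact c r s e v : 4%:R * r ^+ 3 + 3%:R * r = c -> s ^+ 2 = - 3%:R ->
  e ^+ 2 = r ^+ 2 + 1 ->
  4%:R * (v - r) * (v - r2 r s e) * (v - r3 r s e) = 4%:R * v ^+ 3 + 3%:R * v - c.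
Proof.
move=> Hr s2 e2.
have hs : s ^+ 2 + 3%:R = 0 by rewrite s2 addNr.
have he : e ^+ 2 - (r ^+ 2 + 1) = 0 by rewrite e2 subrr.
have key : 4%:R * (v - r) * (v - r2 r s e) * (v - r3 r s e)
   = (4%:R * v ^+ 3 + 3%:R * v - (4%:R * r ^+ 3 + 3%:R * r))
     - (v - r) * ((s ^+ 2 + 3%:R) * e ^+ 2 - 3%:R * (e ^+ 2 - (r ^+ 2 + 1))).
  rewrite /r2 /r3 /hh; field; exact: two_neq0.
by rewrite key hs he Hr mul0r mulr0 subrr mulr0 subr0.
Qed.

Lemma cubic_root c r s e v : 4%:R * r ^+ 3 + 3%:R * r = c -> s ^+ 2 = - 3%:R ->
  e ^+ 2 = r ^+ 2 + 1 ->
  (4%:R * v ^+ 3 + 3%:R * v == c) = [|| v == r, v == r2 r s e | v == r3 r s e].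
Proof.
move=> Hr s2 e2; rewrite -subr_eq0 -(cubic_fact v Hr s2 e2).
by rewrite !mulf_eq0 (negbTE four_neq0) /= !subr_eq0 -!orbA.
Qed.

Lemma cubic_dist r s e : s ^+ 2 = - 3%:R -> e ^+ 2 = r ^+ 2 + 1 ->
  4%:R * r ^+ 2 + 1 != 0 -> e != 0 ->
  [/\ r != r2 r s e, r != r3 r s e & r2 r s e != r3 r s e].
Proof.
move=> s2 e2 r4 e0.
have hs : s ^+ 2 + 3%:R = 0 by rewrite s2 addNr.
have he : e ^+ 2 - (r ^+ 2 + 1) = 0 by rewrite e2 subrr.
have id : 3%:R * (4%:R * r ^+ 2 + 1) = (3%:R * r - s * e) * (3%:R * r + s * e)
    + (s ^+ 2 + 3%:R) * e ^+ 2 - 3%:R * (e ^+ 2 - (r ^+ 2 + 1)) by ring.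
rewrite hs he mul0r mulr0 addr0 subr0 in id.
have nz : (3%:R * r - s * e) * (3%:R * r + s * e) != 0.
  by rewrite -id mulf_neq0 // three_neq0.
move: nz; rewrite mulf_eq0 negb_or => /andP [n1 n2].
have s0 : s != 0.
  apply/eqP => s0; move: hs; rewrite s0 expr0n /= add0r => /eqP.
  by rewrite (negbTE three_neq0).
split.
- apply: contra n1 => /eqP h.
  have e' : 3%:R * r - s * e = 2%:R * (r - r2 r s e) by rewrite /r2 /hh; field; exact: two_neq0.
  by rewrite e' -h subrr mulr0.
- apply: contra n2 => /eqP h.
  have e' : 3%:R * r + s * e = 2%:R * (r - r3 r s e) by rewrite /r3 /hh; field; exact: two_neq0.
  by rewrite e' -h subrr mulr0.
- apply/eqP => h.
  have e' : s * e = r2 r s e - r3 r s e by rewrite /r2 /r3 /hh; field; exact: two_neq0.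
  by move: e'; rewrite h subrr => /eqP; rewrite mulf_eq0 (negbTE s0) (negbTE e0).
Qed.

Lemma card3 (a b d : K) : a != b -> a != d -> b != d -> #|[set a; b; d]| = 3%N.
Proof.
move=> ab ad bd.
have -> : [set a; b; d] = a |: [set b; d] by apply/setP => x; rewrite !inE ?orbA.
rewrite cardsU1 cards2 bd !inE negb_or ab ad //.
Qed.

Lemma caseC0 c : cj c = c -> in_C0 q (c ^+ 2 + 1) -> #|[set v | E c v]| \in [:: 0%N; 3%N].
Proof.
move=> cc; case/and3P => _ nz /existsP [d /andP [/eqP cd /eqP dd]].
have cdd : cj d = d := cd.
have d0 : d != 0 by apply/eqP => d0; move: nz; rewrite -dd d0 expr2 mul0r eqxx.
have noN v : cj v = c - v -> 4%:R * v ^+ 2 - 4%:R * c * v - 1 = 0 -> False.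
  move=> cv h.
  have ct : cj (2%:R * v - c) = - (2%:R * v - c) by rewrite cjB cjM cjn cv cc; ring.
  have tt : (2%:R * v - c - d) * (2%:R * v - c + d) = 0.
    have e : (2%:R * v - c - d) * (2%:R * v - c + d)
       = (4%:R * v ^+ 2 - 4%:R * c * v - 1) + (c ^+ 2 + 1 - d ^+ 2) by ring.
    by rewrite e h dd subrr addr0.
  have ctt : cj (2%:R * v - c) = 2%:R * v - c.
    move/eqP: tt; rewrite mulf_eq0 => /orP [/eqP h'|/eqP h'].
      by rewrite (subr0_eq h') cdd.
    by move/eqP: h'; rewrite addr_eq0 => /eqP ->; rewrite cjN cdd.
  have t0 : 2%:R * v - c = 0.
    have e : 2%:R * (2%:R * v - c) = 0.
      have e' : 2%:R * (2%:R * v - c) = (2%:R * v - c) - - (2%:R * v - c) by ring.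
      by rewrite e' -ct ctt subrr.
    by move/eqP: e; rewrite mulf_eq0 (negbTE two_neq0) => /eqP.
  move: tt; rewrite t0 sub0r add0r mulNr => /eqP.
  by rewrite oppr_eq0 mulf_eq0 orbb (negbTE d0).
case: (set_0Vmem [set v | E c v]) => [-> | [r]]; first by rewrite cards0.
rewrite inE => /(E_split cc) [[cr Hr]|[cv h]]; last by case: (noN _ cv h).
have cE : c ^+ 2 + 1 = (r ^+ 2 + 1) * (4%:R * r ^+ 2 + 1) ^+ 2 by rewrite -Hr; ring.
have r4 : 4%:R * r ^+ 2 + 1 != 0.
  by apply: contra nz => /eqP h; rewrite cE h expr0n /= mulr0.
have e0' : r ^+ 2 + 1 != 0 by apply: contra nz => /eqP h; rewrite cE h mul0r.
pose e := d / (4%:R * r ^+ 2 + 1).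
have e2 : e ^+ 2 = r ^+ 2 + 1.
  by rewrite /e expr_div_n dd cE; field.
have e0 : e != 0 by rewrite /e mulf_neq0 ?invr_eq0.
have ce : cj e = e by rewrite /e cjM cjV cdd !(cjD, cjM, cjn, cjX, cj1) cr.
clearbody e.
have [s [s2 cs]] := sqrtm3.
have [dd1 dd2 dd3] := cubic_dist s2 e2 r4 e0.
suff -> : [set v | E c v] = [set r; r2 r s e; r3 r s e] by rewrite card3.
apply/setP => v; rewrite !inE; apply/idP/idP.
  move/(E_split cc) => [[cv H]|[cv h]]; last by case: (noN _ cv h).
  by rewrite -orbA -(cubic_root v Hr s2 e2) H.
rewrite -orbA => hv; apply: E_F; last by apply/eqP; rewrite (cubic_root v Hr s2 e2).
by case/or3P: hv => /eqP ->; rewrite // /r2 /r3 !(cjM, cjD, cjB, cjN) cr cs ce cjhh.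
Qed.

Lemma cube_inj : {in [set w : K | w * cj w == -1] &, injective (fun w : K => w ^+ 3)}.
Proof.
move=> w1 w2; rewrite !inE => /eqP h1 /eqP h2 /= e.
have w10 : w1 != 0 by apply/eqP => z; move: h1; rewrite z mul0r => /eqP; rewrite eq_sym oppr_eq0 oner_eq0.
have w20 : w2 != 0 by apply/eqP => z; move: h2; rewrite z mul0r => /eqP; rewrite eq_sym oppr_eq0 oner_eq0.
have cw20 : cj w2 != 0 by rewrite cj_eq0.
pose rho := w1 / w2.
have r3 : rho ^+ 3 = 1 by rewrite /rho expr_div_n e divff // expf_neq0.
have rc : cj rho * rho = 1.
  have e' : cj rho * rho = (w1 * cj w1) / (w2 * cj w2).
    by rewrite /rho cjM cjV; field; rewrite cw20 w20.
  by rewrite e' h1 h2 divff // oppr_eq0 oner_eq0.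
have rq : rho ^+ 2 = 1.
  have : rho ^+ (q + 1) = 1 by rewrite exprD expr1.
  have e2 : (q + 1 = 3 * (2 * k) + 2)%N by rewrite qk; lia.
  by rewrite e2 exprD exprM r3 expr1n mul1r.
have r1 : rho = 1 by rewrite -r3 exprS rq mulr1.
by rewrite -(divfK w20 w1) -/rho r1 mul1r.
Qed.

Lemma caseC1 c : cj c = c -> in_C1 q (c ^+ 2 + 1) -> #|[set v | E c v]| = 3%N.
Proof.
move=> cc; case/and3P => _ nz nsq.
have nsq' y : cj y = y -> y ^+ 2 != c ^+ 2 + 1.
  move=> cy; apply: contra nsq => h; apply/existsP; exists y; rewrite h andbT; exact/eqP.
have cd : cj (c ^+ 2 + 1) = c ^+ 2 + 1 by rewrite cjD cjX cc cj1.
have [dl dl2] := sqrt_Fq cd nz.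
have dl0 : dl != 0 by apply/eqP => z; move: nz; rewrite -dl2 z expr0n /= eqxx.
have cdl : cj dl = - dl.
  have : (cj dl - dl) * (cj dl + dl) = 0.
    have e : (cj dl - dl) * (cj dl + dl) = cj (dl ^+ 2) - dl ^+ 2 by rewrite cjX; ring.
    by rewrite e dl2 cd subrr.
  move/eqP; rewrite mulf_eq0 => /orP [/eqP h|/eqP h].
    by move: (nsq' dl (subr0_eq h)); rewrite dl2 eqxx.
  by move/eqP: h; rewrite addr_eq0 => /eqP.
pose v1 := (c + dl) * hh.
pose v2 := (c - dl) * hh.
have Ev v : v = v1 \/ v = v2 -> E c v.
  move=> hv; apply: E_N.
    by case: hv => ->; rewrite /v1 /v2 !(cjM, cjD, cjB, cjN) cc cdl cjhh /hh; field; exact: two_neq0.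
  have e : 4%:R * v ^+ 2 - 4%:R * c * v - 1 = (2%:R * v - c) ^+ 2 - (c ^+ 2 + 1) by ring.
  rewrite e -dl2; case: hv => ->; rewrite /v1 /v2 /hh; field; exact: two_neq0.
pose T := [set w : K | w * cj w == -1].
have sub : [set w ^+ 3 | w in T] \subset T.
  apply/subsetP => x /imsetP [w]; rewrite !inE => /eqP h ->.
  by rewrite cjX -exprMn h; apply/eqP; ring.
have eqT : [set w ^+ 3 | w in T] = T.
  by apply/eqP; rewrite eqEcard sub (card_in_imset cube_inj) leqnn.
have WT : c + dl \in T.
  rewrite inE cjD cc cdl; apply/eqP.
  have e : (c + dl) * (c + - dl) = c ^+ 2 + 1 - dl ^+ 2 - 1 by ring.
  by rewrite e dl2 subrr sub0r.
rewrite -eqT in WT; case/imsetP: WT => w; rewrite inE => /eqP wT Ww.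
pose r0 := (w + cj w) * hh.
have cr0 : cj r0 = r0 by rewrite /r0 cjM cjD cjK cjhh addrC.
have Hr0 : 4%:R * r0 ^+ 3 + 3%:R * r0 = c.
  have e : 4%:R * r0 ^+ 3 + 3%:R * r0
     = (w ^+ 3 + cj w ^+ 3) * hh + 3%:R * hh * (w + cj w) * (w * cj w + 1).
    rewrite /r0 /hh; field; exact: two_neq0.
  rewrite e wT addNr mulr0 addr0 -cjX -Ww cjD cc cdl /hh; field; exact: two_neq0.
clearbody r0.
have cE : c ^+ 2 + 1 = (r0 ^+ 2 + 1) * (4%:R * r0 ^+ 2 + 1) ^+ 2 by rewrite -Hr0; ring.
have r4 : 4%:R * r0 ^+ 2 + 1 != 0.
  by apply: contra nz => /eqP h; rewrite cE h expr0n /= mulr0.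
have [s [s2 cs]] := sqrtm3.
have uniq1 v : cj v = v -> 4%:R * v ^+ 3 + 3%:R * v = c -> v = r0.
  move=> cv H; apply/eqP; apply/negPn/negP => vr.
  have fa : 4%:R * v ^+ 3 + 3%:R * v - c
     = (v - r0) * (4%:R * v ^+ 2 + 4%:R * r0 * v + 4%:R * r0 ^+ 2 + 3%:R) by rewrite -Hr0; ring.
  rewrite H subrr in fa.
  move/esym/eqP: fa; rewrite mulf_eq0 subr_eq0 (negbTE vr) /= => /eqP Q.
  pose y := s * (2%:R * v + r0) * (4%:R * r0 ^+ 2 + 1) * (3%:R)^-1.
  have cy : cj y = y by rewrite /y !(cjM, cjD, cjV, cjn, cjX, cj1) cs cv cr0.
  have y2 : y ^+ 2 = c ^+ 2 + 1.
    have e : y ^+ 2 - (r0 ^+ 2 + 1) * (4%:R * r0 ^+ 2 + 1) ^+ 2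
      = ((s ^+ 2 + 3%:R) * (2%:R * v + r0) ^+ 2
         - 3%:R * (4%:R * v ^+ 2 + 4%:R * r0 * v + 4%:R * r0 ^+ 2 + 3%:R))
        * (4%:R * r0 ^+ 2 + 1) ^+ 2 * (3%:R ^+ 2)^-1.
      have n9 : (9%:R : K) != 0.
        by rewrite (_ : 9 = 3 * 3)%N // natrM mulf_neq0 // three_neq0.
      by rewrite /y; field; rewrite three_neq0 n9.
    rewrite s2 addNr mul0r Q mulr0 subrr !mul0r in e.
    by rewrite cE; apply/eqP; rewrite -subr_eq0 e.
  by move: (nsq' y cy); rewrite y2 eqxx.
have v12 : v1 != v2.
  apply/eqP => h.
  have e : dl = v1 - v2 by rewrite /v1 /v2 /hh; field; exact: two_neq0.
  by move: dl0; rewrite e h subrr eqxx.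
have cv1 : cj v1 = v2 by rewrite /v1 /v2 !(cjM, cjD) cc cdl cjhh.
have cv2 : cj v2 = v1 by rewrite /v1 /v2 !(cjM, cjD, cjB, cjN) cc cdl cjhh opprK.
have r01 : r0 != v1 by apply/eqP => h; move: v12; rewrite -cv1 -h cr0 h eqxx.
have r02 : r0 != v2 by apply/eqP => h; move: v12; rewrite -cv2 -h cr0 h eqxx.
suff -> : [set v | E c v] = [set r0; v1; v2] by rewrite card3.
apply/setP => v; rewrite !inE; apply/idP/idP.
  move/(E_split cc) => [[cv H]|[cv h]]; first by rewrite (uniq1 v cv H) eqxx.
  have : (2%:R * v - c - dl) * (2%:R * v - c + dl) = 0.
    have e : (2%:R * v - c - dl) * (2%:R * v - c + dl)
       = (4%:R * v ^+ 2 - 4%:R * c * v - 1) + (c ^+ 2 + 1 - dl ^+ 2) by ring.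
    by rewrite e h dl2 subrr addr0.
  move/eqP; rewrite mulf_eq0 => /orP [/eqP h'|/eqP h'].
    suff -> : v = v1 by rewrite eqxx orbT.
    have e : v = (2%:R * v - c - dl) * hh + v1 by rewrite /v1 /hh; field; exact: two_neq0.
    by rewrite e h' mul0r add0r.
  suff -> : v = v2 by rewrite eqxx !orbT.
  have e : v = (2%:R * v - c + dl) * hh + v2 by rewrite /v2 /hh; field; exact: two_neq0.
  by rewrite e h' mul0r add0r.
rewrite -orbA; case/or3P => /eqP ->; [apply: E_F => // | apply: Ev; left | apply: Ev; right] => //.
Qed.

Lemma main_sec (c : K) : in_Fq q c -> c != 0 ->
  [/\ in_C1 q (c ^+ 2 + 1) -> beta_f (fun x : K => x ^+ (q + 2)) 1 (2%:R * c / 4%:R) = 3%N,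
      in_C0 q (c ^+ 2 + 1) -> beta_f (fun x : K => x ^+ (q + 2)) 1 (2%:R * c / 4%:R) \in [:: 0%N; 3%N]
    & c ^+ 2 + 1 = 0 -> beta_f (fun x : K => x ^+ (q + 2)) 1 (2%:R * c / 4%:R) \in [:: 0%N; 1%N; 2%N]].
Proof.
move=> /eqP cc c0.
have b : (2%:R * c) / 4%:R = c * hh.
  rewrite /hh; field; rewrite four_neq0 ?two_neq0 //.
rewrite /beta_f b (beta_S c0).
split.
- exact: caseC1.
- exact: caseC0.
- move=> Z; have := caseZ cc Z.
  by case: #|_| => [|[|[|n]]].
Qed.

End L9.

Unset Implicit Arguments.
Set Strict Implicit.

Theorem lemma9 (K : finFieldType) (p m q : nat) :
  prime p -> odd p -> (0 < m)%N -> q = (p ^ m)%N -> (q %% 6 = 1)%N ->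
  #|K| = (q ^ 2)%N ->
  let f := fun x : K => x ^+ (q + 2) in
  let beta := fun b : K => beta_f f 1 (b / 4%:R) in
  forall c : K, in_Fq q c -> c != 0 ->
    [/\ in_C1 q (c ^+ 2 + 1) -> beta (2%:R * c) = 3%N,
        in_C0 q (c ^+ 2 + 1) -> beta (2%:R * c) \in [:: 0%N; 3%N]
      & c ^+ 2 + 1 = 0 -> beta (2%:R * c) \in [:: 0%N; 1%N; 2%N]].
Proof.
move=> pp podd m0 qE q6 cardK f beta c cq c0.
exact: (main_sec pp podd m0 qE q6 cardK cq c0).
Qed.
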